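(* Let $\mu^\star_0,\mu^\star_1$ be any probability measures on $\mathbb{R}^d$ with finite second moment. Then any coupling $(Y_0,Y_1)$ of $\mu^\star_0$ and $\mu^\star_1$ induces an optimal solution $(Y_t)_{t\in[0,1]}$ of the P-spline problem with data $\mu^\star_0,\mu^\star_1$ at times $0,1$, whose values at times $0$ and $1$ are $Y_0$ and $Y_1$.
   Context: The P-spline problem with data $\mu^\star_{t_0},\dots,\mu^\star_{t_N}$ at times $0=t_0<\dots<t_N=1$ is $\inf_{(Y_t)}\int_0^1\mathbb E[\|\ddot Y_t\|^2]\,dt$ over stochastic processes $(Y_t)_{t\in[0,1]}$ in $\mathbb{R}^d$ with twice differentiable paths and $Y_{t_i}\sim\mu^\star_{t_i}$ for all $i$. *)

(* Defs.v *)
From HB Require Import structures.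
From mathcomp Require Import all_boot all_order all_algebra.
From mathcomp Require Import all_classical all_reals all_analysis.
Set Implicit Arguments. Unset Strict Implicit. Unset Printing Implicit Defensive.
Import Order.TTheory GRing.Theory Num.Theory.
Import numFieldNormedType.Exports.
Local Open Scope classical_set_scope.
Local Open Scope ring_scope.

(* R^d, represented by row vectors 'rV[R]_d, equipped with its Borel
   sigma-algebra (generated by the open sets of its standard topology). *)
Definition Rd (R : realType) (d : nat)
    : measurableType (sigma_display (@open 'rV[R]_d)) :=
  g_sigma_algebraType (@open 'rV[R]_d).

Definition sqnorm (R : realType) (d : nat) (v : 'rV[R]_d) : R :=
  \sum_(i < d) v ord0 i ^+ 2.

Definition finite_second_moment (R : realType) (d : nat)
    (mu : probability (Rd R d) R) : Prop :=
  (\int[mu]_x (sqnorm (x : 'rV[R]_d))%:E < +oo)%E.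

Definition has_law dO (Omega : measurableType dO) (R : realType) (d : nat)
    (P : probability Omega R) (X : Omega -> 'rV[R]_d)
    (mu : probability (Rd R d) R) : Prop :=
  measurable_fun [set: Omega] (X : Omega -> Rd R d) /\
  forall A : set (Rd R d), measurable A -> P (X @^-1` A) = mu A.

Definition accel dO (Omega : measurableType dO) (R : realType) (d : nat)
    (Y : R -> Omega -> 'rV[R]_d) (w : Omega) : R -> 'rV[R]_d :=
  derive1 (derive1 (fun s => Y s w)).

Definition twice_diff_process dO (Omega : measurableType dO) (R : realType)
    (d : nat) (Y : R -> Omega -> 'rV[R]_d) : Prop :=
  (forall t, measurable_fun [set: Omega] (Y t : Omega -> Rd R d)) /\
  (forall w t, derivable (fun s => Y s w) t 1 /\
               derivable (derive1 (fun s => Y s w)) t 1).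

Definition spline_cost dO (Omega : measurableType dO) (R : realType)
    (d : nat) (P : probability Omega R) (Y : R -> Omega -> 'rV[R]_d)
    : \bar R :=
  (\int[lebesgue_measure]_(t in `[0%R, 1%R])
     \int[P]_w (sqnorm (accel Y w t))%:E)%E.

Definition pspline_admissible dO (Omega : measurableType dO) (R : realType)
    (d : nat) (data : seq (R * probability (Rd R d) R))
    (P : probability Omega R) (Y : R -> Omega -> 'rV[R]_d) : Prop :=
  twice_diff_process Y /\
  forall p, p \in data -> has_law P (Y p.1) p.2.

(* Main.v *)
Require Import Defs.
From HB Require Import structures.
From mathcomp Require Import all_boot all_order all_algebra.
From mathcomp Require Import all_classical all_reals all_analysis.
From mathcomp Require Import lra.
Import Order.TTheory GRing.Theory Num.Theory.
Import numFieldNormedType.Exports.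
Local Open Scope classical_set_scope.
Local Open Scope ring_scope.
Lemma mxballE (R : realType) d (c y : 'rV[R]_d) r : ball c r y <-> (0 < r /\ forall i, `|c ord0 i - y ord0 i| < r).
Proof.
split.
- move=> [r0 H]; split => // i; have := H ord0 i. rewrite /ball /=. done.
- move=> [r0 H]; split => // i j; rewrite ord1. exact: H.
Qed.

Lemma ball_pre_meas (R : realType) d dO (Omega : measurableType dO)
  (f : Omega -> 'rV[R]_d) (c : 'rV[R]_d) (r : R) :
  (forall i, measurable_fun setT (fun w => f w ord0 i)) ->
  measurable (f @^-1` ball c r).
Proof.
move=> hf.
pose S := \bigcap_(i in setT) ((fun w => f w ord0 i) @^-1` ball (c ord0 i) r).
have HS : measurable S.
  apply: fin_bigcap_measurable; first exact: finite_finset.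
  move=> i _; rewrite -[X in measurable X]setTI; apply: hf => //.
  apply: measurable_realfun.open_measurable; exact: ball_open.
have [r0|r0] := ltP 0 r; last first.
  suff H : forall B : set Omega, (forall w, B w -> False) -> measurable B.
    by apply: H => w /= /mxballE [] /lt_le_trans /(_ r0); rewrite ltxx.
  move=> B HB; suff -> : B = set0 by [].
  by apply/seteqP; split => // w /HB.
suff H : forall B : set Omega, (forall w, B w <-> S w) -> measurable B.
  apply: H => w /=; split.
    by move=> /mxballE [_ H] i _; rewrite /ball /=; apply: H.
  move=> H; apply/mxballE; split => // i; exact: (H i I).
move=> B HB; suff -> : B = S by [].
by apply/seteqP; split => w /HB.
Qed.

Definition mball {R : realType} {d} (c : 'rV[R]_d) (r : R) : set 'rV[R]_d := ball c r.

Lemma mballE (R : realType) d (c y : 'rV[R]_d) r :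
  mball c r y <-> (0 < r /\ forall i, `|c ord0 i - y ord0 i| < r).
Proof. exact: mxballE. Qed.

Lemma open_mball (R : realType) d (U : set 'rV[R]_d) x :
  open U -> U x -> exists2 e, 0 < e & mball x e `<=` U.
Proof.
move=> oU Ux; have := oU x Ux; move/nbhs_ballP => [e e0 H].
by exists e.
Qed.

Lemma small_inv (R : realType) (e : R) : 0 < e -> exists k : nat, k.+1%:R^-1 < e.
Proof.
move=> e0.
have [N _ HN] := near_infty_natSinv_lt (PosNum e0).
by exists N; apply: HN => /=.
Qed.

Lemma meas_of_coords (R : realType) d dO (Omega : measurableType dO)
  (f : Omega -> 'rV[R]_d) :
  (forall i, measurable_fun setT (fun w => f w ord0 i)) ->
  measurable_fun [set: Omega] (f : Omega -> Rd R d).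
Proof.
move=> hf.
apply: (@measurability _ _ Omega (Rd R d) setT f (@open 'rV[R]_d) erefl).
move=> _ [U oU <-]; rewrite setTI.
pose c (k : 'rV[rat]_d * nat) : 'rV[R]_d := map_mx ratr k.1.
pose r (k : 'rV[rat]_d * nat) : R := k.2.+1%:R^-1.
pose B (n : nat) : set 'rV[R]_d :=
  match unpickle n with
  | Some k => if pselect (mball (c k) (r k) `<=` U) then mball (c k) (r k) else set0
  | None => set0 end.
have EU : U = \bigcup_n B n.
  apply/seteqP; split => [x Ux|x [n _]]; last first.
    rewrite /B; case: (unpickle n) => [k|//].
    by destruct (pselect _) as [H|] => //; apply: H.
  have [e e0 He] := @open_mball R d U x oU Ux.
  have [k Hk] : exists k : nat, k.+1%:R^-1 < e / 2.
    by apply: small_inv; rewrite divr_gt0.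
  have Hq : forall i : 'I_d, exists q : rat,
      ratr q \in `](x ord0 i - k.+1%:R^-1), (x ord0 i + k.+1%:R^-1)[.
    move=> i; apply: rat_in_itvoo.
    have hk : 0 < k.+1%:R^-1 :> R by rewrite invr_gt0 ltr0Sn.
    move: hk; generalize (k.+1%:R^-1 : R) => t ht.
    by rewrite ltrD2l -subr_gt0 opprK addr_gt0.
  pose g i := projT1 (cid (Hq i)).
  have Hg i : ratr (g i) \in `](x ord0 i - k.+1%:R^-1), (x ord0 i + k.+1%:R^-1)[.
    exact: (projT2 (cid (Hq i))).
  pose q : 'rV[rat]_d := \row_i g i.
  have cq i : c (q, k) ord0 i = ratr (g i) by rewrite /c /= !mxE.
  have Hd i : `|c (q, k) ord0 i - x ord0 i| < k.+1%:R^-1.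
    have := Hg i; rewrite in_itv /= cq => /andP[h1 h2].
    rewrite ltr_norml; apply/andP; split.
      change (- (k.+1%:R^-1) < ratr (g i) - x ord0 i :> R).
      set t := (k.+1%:R^-1 : R) in h1 h2 *; clearbody t; lra.
    change (ratr (g i) - x ord0 i < k.+1%:R^-1 :> R).
    set t := (k.+1%:R^-1 : R) in h1 h2 *; clearbody t; lra.
  exists (pickle (q, k)) => //.
  rewrite /B pickleK; destruct (pselect _) as [hh|H].
    by apply/mballE; split => //; rewrite /r invr_gt0 ltr0Sn.
  exfalso; apply: H => y /mballE [_ Hy]; apply: He; apply/mballE; split => // i.
  rewrite (le_lt_trans (ler_distD (c (q, k) ord0 i) _ _)) //.
  rewrite (splitr e) (distrC (x ord0 i)).
  by apply: ltrD; apply: lt_trans Hk; [exact: Hd|exact: Hy].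
rewrite EU preimage_bigcup; apply: bigcupT_measurable => n.
rewrite /B; case: (unpickle n) => [k|]; last by rewrite preimage_set0.
destruct (pselect _); last by rewrite preimage_set0.
exact: ball_pre_meas.
Qed.

Lemma coord_meas (R : realType) d (i : 'I_d) :
  measurable_fun setT (fun v : Rd R d => v ord0 i : R).
Proof.
apply: (measurability _ (measurable_realfun.RGenOpens.measurableE R)).
move=> _ [_ [a [b ->]] <-]; rewrite setTI.
apply: sub_gen_smallest.
have := @coord_continuous R 1 d ord0 i.
move/continuousP; apply. exact: interval_open.
Qed.

Lemma Dscal (R : realType) d (v : 'rV[R]_d) (t : R) :
  is_derive t 1 (fun s : R => s *: v) v.
Proof.
apply: DeriveDef; first exact: diff_derivable.
by rewrite deriveE // diff_val scale1r.
Qed.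

Lemma sqnorm0 (R : realType) d : sqnorm (0 : 'rV[R]_d) = 0.
Proof. by rewrite /sqnorm big1 // => i _; rewrite mxE expr0n. Qed.

Lemma sqnorm_ge0 (R : realType) d (v : 'rV[R]_d) : 0 <= sqnorm v.
Proof. by rewrite /sqnorm sumr_ge0 // => i _; rewrite sqr_ge0. Qed.

Theorem proposition4 (R : realType) (d : nat)
    (mu0 mu1 : probability (Rd R d) R)
    (hmu0 : finite_second_moment mu0) (hmu1 : finite_second_moment mu1)
    (dO : measure_display) (Omega : measurableType dO)
    (P : probability Omega R) (Y0 Y1 : Omega -> 'rV[R]_d)
    (hY0 : has_law P Y0 mu0) (hY1 : has_law P Y1 mu1) :
  exists Y : R -> Omega -> 'rV[R]_d,
    [/\ pspline_admissible [:: (0, mu0); (1, mu1)] P Y,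
        Y 0 = Y0, Y 1 = Y1 &
        forall (dO' : measure_display) (Omega' : measurableType dO')
               (P' : probability Omega' R) (Y' : R -> Omega' -> 'rV[R]_d),
          pspline_admissible [:: (0, mu0); (1, mu1)] P' Y' ->
          (spline_cost P Y <= spline_cost P' Y')%E].
Proof.
pose Y : R -> Omega -> 'rV[R]_d := fun t w => Y0 w + t *: (Y1 w - Y0 w).
have EY0 : Y 0 = Y0 by apply: funext => w; rewrite /Y scale0r addr0.
have EY1 : Y 1 = Y1 by apply: funext => w; rewrite /Y scale1r addrC subrK.
have DY (w : Omega) (t : R) : is_derive t 1 (fun s => Y s w) (Y1 w - Y0 w).
  have H := is_deriveD (is_derive_cst (Y0 w) t 1) (@Dscal R d (Y1 w - Y0 w) t).
  rewrite add0r in H; exact: H.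
have D1 (w : Omega) : derive1 (fun s => Y s w) = cst (Y1 w - Y0 w).
  by apply: funext => t; rewrite derive1E derive_val.
have A (w : Omega) (t : R) : accel Y w t = 0 by rewrite /accel D1 derive1_cst.
have mc (X : Omega -> 'rV[R]_d) i : measurable_fun [set: Omega] (X : Omega -> Rd R d) ->
    measurable_fun setT (fun w => X w ord0 i).
  move=> mX; have H := measurableT_comp (coord_meas R d i) mX; exact: H.
exists Y; split => //.
- split.
    split.
      move=> t; apply: meas_of_coords => i.
      rewrite /Y.
      under eq_fun do rewrite !mxE.
      apply: measurable_realfun.measurable_funD; first exact: mc hY0.1.
      apply: measurable_realfun.measurable_funM; first exact: measurable_cst.
      by apply: measurable_realfun.measurable_funB; [exact: mc hY1.1|exact: mc hY0.1].
    move=> w t; split.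
      by case: (DY w t).
    by rewrite D1; exact: derivable_cst.
  move=> p; rewrite !inE => /orP[/eqP -> | /eqP ->] /=.
    by rewrite EY0.
  by rewrite EY1.
- move=> dO' Omega' P' Y' _.
  have -> : spline_cost P Y = 0%E.
    rewrite /spline_cost (eq_integral (fun _ => 0%E)) ?integral0 // => t _.
    rewrite (eq_integral (fun _ => 0%E)) ?integral0 // => w _.
    by rewrite A sqnorm0.
  apply: integral_ge0 => t _; apply: integral_ge0 => w _.
  by rewrite lee_fin sqnorm_ge0.
Qed.
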